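(* For every $d\ge1$, $$G_{\mathbb C}.(\Xi_+\times\Xi_+)=\{(z,w)\in\mathrm{dS}^d_{\mathbb C}\times\mathrm{dS}^d_{\mathbb C}\;:\;\beta(z,\overline w)\notin(-\infty,-1]\},$$ where $G_{\mathbb C}$ acts on pairs by $g.(z,w)=(gz,\overline g\,w)$.
   Context: Let $d\ge1$. On $\mathbb C^{1+d}$ let $\beta(z,w)=z_0w_0-z_1w_1-\dots-z_dw_d$, let $\overline z$ denote coordinatewise complex conjugation, $V=\mathbb R^{1+d}$, $V_+=\{x\in V:x_0>0,\beta(x,x)>0\}$, $\mathrm{dS}^d_{\mathbb C}=\{z:\beta(z,z)=-1\}$, $\Xi_+=\mathrm{dS}^d_{\mathbb C}\cap(V+iV_+)$. Let $G_{\mathbb C}=\mathrm{SO}_{1+d}(\mathbb C)$ be the determinant-one complex linear maps preserving $\beta$, and for $g\in G_{\mathbb C}$ let $\overline g$ be its entrywise complex conjugate (again in $G_{\mathbb C}$). *)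

(* Defs.v *)
From HB Require Import structures.
From mathcomp Require Import all_boot all_order all_algebra.
From mathcomp Require Import complex.
From mathcomp Require Import reals.
Set Implicit Arguments. Unset Strict Implicit. Unset Printing Implicit Defensive.
Import Order.TTheory GRing.Theory Num.Theory.
Local Open Scope ring_scope.
Local Open Scope complex_scope.

Section Defs.
Variables (R : realType) (d : nat).
Local Notation C := (R[i]).

(* Vectors of K^{1+d} are column vectors indexed by 'I_(1+d); index 0 is the
   "time" coordinate. *)

Definition betaC (z w : 'cV[C]_(1 + d)) : C :=
  z ord0 0 * w ord0 0 - \sum_(i < d) z (lift ord0 i) 0 * w (lift ord0 i) 0.

Definition betaR (x y : 'cV[R]_(1 + d)) : R :=
  x ord0 0 * y ord0 0 - \sum_(i < d) x (lift ord0 i) 0 * y (lift ord0 i) 0.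

Definition conjv (z : 'cV[C]_(1 + d)) : 'cV[C]_(1 + d) := map_mx (fun c : C => c^*) z.
Definition conjm (g : 'M[C]_(1 + d)) : 'M[C]_(1 + d) := map_mx (fun c : C => c^*) g.

Definition Rev (z : 'cV[C]_(1 + d)) : 'cV[R]_(1 + d) := map_mx (@complex.Re R) z.
Definition Imv (z : 'cV[C]_(1 + d)) : 'cV[R]_(1 + d) := map_mx (@complex.Im R) z.

Definition Vplus (x : 'cV[R]_(1 + d)) : Prop := 0 < x ord0 0 /\ 0 < betaR x x.

Definition dSC (z : 'cV[C]_(1 + d)) : Prop := betaC z z = -1.

Definition XiPlus (z : 'cV[C]_(1 + d)) : Prop := dSC z /\ Vplus (Imv z).

Definition SOC (g : 'M[C]_(1 + d)) : Prop :=
  \det g = 1 /\ forall z w : 'cV[C]_(1 + d), betaC (g *m z) (g *m w) = betaC z w.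

Definition in_half_line (c : C) : Prop := complex.Im c = 0 /\ complex.Re c <= -1.

End Defs.

(* Main.v *)
Require Import Defs.
From HB Require Import structures.
From mathcomp Require Import all_boot all_order all_algebra.
From mathcomp Require Import complex.
From mathcomp Require Import reals.
From mathcomp Require Import ring lra.
Set Implicit Arguments. Unset Strict Implicit. Unset Printing Implicit Defensive.
Import Order.TTheory GRing.Theory Num.Theory.
Local Open Scope ring_scope.
Local Open Scope complex_scope.
Section Bet.
Variables (K : comPzRingType) (d : nat).
Implicit Types x y z : 'cV[K]_(1 + d).
Definition bet x y : K :=
  x ord0 0 * y ord0 0 - \sum_(i < d) x (lift ord0 i) 0 * y (lift ord0 i) 0.

Lemma betS x y : bet x y = bet y x.
Proof. by rewrite /bet mulrC; congr (_ - _); apply: eq_bigr => i _; rewrite mulrC. Qed.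

Lemma betDl x y z : bet (x + y) z = bet x z + bet y z.
Proof.
rewrite /bet !mxE.
have -> : \sum_(i < d) (x + y) (lift ord0 i) 0 * z (lift ord0 i) 0 =
   \sum_(i < d) x (lift ord0 i) 0 * z (lift ord0 i) 0 + \sum_(i < d) y (lift ord0 i) 0 * z (lift ord0 i) 0.
  by rewrite -big_split; apply: eq_bigr => i _; rewrite mxE mulrDl.
ring.
Qed.

Lemma betZl a x z : bet (a *: x) z = a * bet x z.
Proof.
rewrite /bet !mxE.
have -> : \sum_(i < d) (a *: x) (lift ord0 i) 0 * z (lift ord0 i) 0 =
   a * \sum_(i < d) x (lift ord0 i) 0 * z (lift ord0 i) 0.
  by rewrite mulr_sumr; apply: eq_bigr => i _; rewrite mxE mulrA.
ring.
Qed.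

Lemma betNl x z : bet (- x) z = - bet x z.
Proof. by rewrite -scaleN1r betZl mulN1r. Qed.
Lemma betBl x y z : bet (x - y) z = bet x z - bet y z.
Proof. by rewrite betDl betNl. Qed.
Lemma betDr x y z : bet z (x + y) = bet z x + bet z y.
Proof. by rewrite betS betDl !(betS z). Qed.
Lemma betZr a x z : bet z (a *: x) = a * bet z x.
Proof. by rewrite betS betZl betS. Qed.
Lemma betBr x y z : bet z (x - y) = bet z x - bet z y.
Proof. by rewrite betS betBl !(betS z). Qed.
End Bet.

Lemma betaCE (R : realType) d (x y : 'cV[R[i]]_(1 + d)) : betaC x y = bet x y.
Proof. by []. Qed.
Lemma betaRE (R : realType) d (x y : 'cV[R]_(1 + d)) : betaR x y = bet x y.
Proof. by []. Qed.

Section Real.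
Variables (F : realFieldType) (d : nat).
Implicit Types x y : 'cV[F]_(1 + d).

Lemma bet_w0 x : x ord0 0 = 0 -> bet x x <= 0.
Proof.
move=> h; rewrite /bet h mul0r sub0r oppr_le0; apply: sumr_ge0 => i _.
by rewrite -expr2 sqr_ge0.
Qed.

Lemma bet_orth x y : 0 < bet y y -> bet x y = 0 -> bet x x <= 0.
Proof.
move=> hy hxy.
have y0 : y ord0 0 != 0.
  apply/negP => /eqP h; have := bet_w0 h; lra.
set t := x ord0 0 / y ord0 0.
have hv : (x - t *: y) ord0 0 = 0 by rewrite !mxE /t divfK // subrr.
have := bet_w0 hv.
rewrite betBl !betBr !betZl !betZr (betS y x) hxy.
have : 0 <= t * t * bet y y by apply: mulr_ge0; [rewrite -expr2 sqr_ge0 | exact: ltW].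
nra.
Qed.

Lemma bet_pos y y' : 0 < y ord0 0 -> 0 < bet y y -> 0 < y' ord0 0 -> 0 < bet y' y' ->
  0 < bet y y'.
Proof.
move=> y0 hy y'0 hy'.
set t := y' ord0 0 / y ord0 0.
have t0 : 0 < t by rewrite divr_gt0.
have hv : (y' - t *: y) ord0 0 = 0.
  by rewrite !mxE /t divfK ?subrr // gt_eqF.
have := bet_w0 hv.
rewrite betBl !betBr !betZl !betZr (betS y y').
have : 0 <= t * t * bet y y by apply: mulr_ge0; [rewrite -expr2 sqr_ge0 | exact: ltW].
nra.
Qed.
End Real.

Section Cx.
Variable R : realType.
Local Notation Re := (@complex.Re R).
Local Notation Im := (@complex.Im R).
Local Notation C := (R[i]).
Lemma ReM (a b : C) : Re (a*b) = Re a * Re b - Im a * Im b.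
Proof. by case: a => ? ?; case: b => ? ? /=. Qed.
Lemma ImM (a b : C) : Im (a*b) = Re a * Im b + Im a * Re b.
Proof. case: a => ? ?; case: b => ? ? /=. ring. Qed.
Lemma ReB (a b : C) : Re (a - b) = Re a - Re b.
Proof. by case: a => ? ?; case: b => ? ? /=. Qed.
Lemma ImB (a b : C) : Im (a - b) = Im a - Im b.
Proof. by case: a => ? ?; case: b => ? ? /=. Qed.
Lemma Re_sum n (F : 'I_n -> C) : Re (\sum_i F i) = \sum_i Re (F i).
Proof. by rewrite raddf_sum. Qed.
Lemma Im_sum n (F : 'I_n -> C) : Im (\sum_i F i) = \sum_i Im (F i).
Proof. by rewrite raddf_sum. Qed.
Lemma Im_inv (a : C) : Im (a^-1) = - Im a / (Re a ^+2 + Im a ^+ 2).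
Proof. by case: a => x y /=; rewrite mulNr. Qed.
Lemma Re_inv (a : C) : Re (a^-1) = Re a / (Re a ^+2 + Im a ^+ 2).
Proof. by case: a => x y /=. Qed.
Lemma cRe_conj (a : C) : Re (a^*) = Re a.
Proof. by case: a. Qed.
Lemma cIm_conj (a : C) : Im (a^*) = - Im a.
Proof. by case: a. Qed.

Variable d : nat.
Implicit Types x y z w : 'cV[C]_(1 + d).

Lemma Re_bet x y : Re (betaC x y) = betaR (Rev x) (Rev y) - betaR (Imv x) (Imv y).
Proof.
rewrite /betaC /betaR ReB ReM Re_sum !mxE.
have -> : \sum_(i < d) Re (x (lift ord0 i) 0 * y (lift ord0 i) 0) =
  \sum_(i < d) Rev x (lift ord0 i) 0 * Rev y (lift ord0 i) 0 -
  \sum_(i < d) Imv x (lift ord0 i) 0 * Imv y (lift ord0 i) 0.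
  by rewrite -sumrB; apply: eq_bigr => i _; rewrite ReM !mxE.
ring.
Qed.

Lemma Im_bet x y : Im (betaC x y) = betaR (Rev x) (Imv y) + betaR (Imv x) (Rev y).
Proof.
rewrite /betaC /betaR ImB ImM Im_sum !mxE.
have -> : \sum_(i < d) Im (x (lift ord0 i) 0 * y (lift ord0 i) 0) =
  \sum_(i < d) Rev x (lift ord0 i) 0 * Imv y (lift ord0 i) 0 +
  \sum_(i < d) Imv x (lift ord0 i) 0 * Rev y (lift ord0 i) 0.
  by rewrite -big_split; apply: eq_bigr => i _; rewrite ImM !mxE.
ring.
Qed.

Lemma bet_conj x y : betaC (conjv x) (conjv y) = (betaC x y)^*.
Proof.
rewrite /betaC rmorphB rmorphM rmorph_sum /conjv !mxE; congr (_ - _).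
by apply: eq_bigr => i _; rewrite !mxE rmorphM.
Qed.

Lemma conjvK x : conjv (conjv x) = x.
Proof. by apply/matrixP => i j; rewrite !mxE conjcK. Qed.

Lemma conjv_mul g x : conjv (conjm g *m x) = g *m conjv x.
Proof.
rewrite /conjv /conjm map_mxM -map_mx_comp.
by congr (_ *m _); apply/matrixP => i j; rewrite !mxE /= conjcK.
Qed.

Lemma Vplus_add (y y' : 'cV[R]_(1 + d)) : Vplus y -> Vplus y' -> Vplus (y + y').
Proof.
move=> [h0 h1] [h0' h1']; split; first by rewrite mxE addr_gt0.
rewrite betaRE betDl !betDr (betS y' y).
have := bet_pos h0 h1 h0' h1'; rewrite -!betaRE; lra.
Qed.

Lemma fwd_half z w : XiPlus z -> XiPlus w -> ~ in_half_line (betaC z (conjv w)).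
Proof.
move=> [hz Vz] [hw Vw] [hIm hRe].
set c := betaC z (conjv w) in hIm hRe.
set v := z - conjv w.
have hv : betaC v v = -2 - 2 * c.
  rewrite /v !betaCE betBl !betBr -!betaCE bet_conj hw (betaCE (conjv w) z) betS -!betaCE hz.
  rewrite /c rmorphN rmorph1; ring.
have hY : Imv v = Imv z + Imv w.
  by apply/matrixP => i j; rewrite !mxE ImB cIm_conj opprK.
have VY := Vplus_add Vz Vw; rewrite -hY in VY.
have hRe' := Re_bet v v; have hIm' := Im_bet v v.
rewrite hv in hRe' hIm'.
have e1 : forall c0 : C, Re (-2 - 2 * c0) = -2 - 2 * Re c0.
  by move=> [a b] /=; ring.
have e2 : forall c0 : C, Im (-2 - 2 * c0) = - 2 * Im c0.
  by move=> [a b] /=; ring.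
rewrite e1 in hRe'; rewrite e2 hIm (betaRE (Imv v)) betS -betaRE in hIm'.
have hXY : betaR (Rev v) (Imv v) = 0 by lra.
have := bet_orth (proj2 VY) hXY. rewrite -!betaRE.
case: VY => _ HY. lra.
Qed.
End Cx.

Section Mx.
Variable R : realType.
Local Notation C := (R[i]).
Variable d : nat.
Implicit Types x y z w v : 'cV[C]_(1 + d).
Implicit Types h g : 'M[C]_(1 + d).

Definition jsgn (i : 'I_(1 + d)) : C := if i == ord0 then 1 else -1.
Definition Jm : 'M[C]_(1 + d) := diag_mx (\row_i jsgn i).

Lemma betaM x y : betaC x y = (x^T *m Jm *m y) 0 0.
Proof.
rewrite mul_mx_diag !mxE big_ord_recl !mxE /jsgn eqxx mulr1.
rewrite /betaC -sumrN; congr (_ + _); apply: eq_bigr => i _.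
rewrite !mxE eq_sym (negbTE (neq_lift ord0 i)).
by rewrite mulrN1 mulNr.
Qed.

Definition pres h := forall x y, betaC (h *m x) (h *m y) = betaC x y.

Lemma delta_entry (A : 'M[C]_(1 + d)) i j :
  ((delta_mx i (0 : 'I_1) : 'cV[C]_(1 + d))^T *m A *m (delta_mx j (0 : 'I_1) : 'cV[C]_(1 + d))) 0 0 = A i j.
Proof. by rewrite trmx_delta -rowE -colE !mxE. Qed.

Lemma pres_mx h : pres h -> h^T *m Jm *m h = Jm.
Proof.
move=> H; apply/matrixP => i j.
rewrite -(delta_entry _ i j) -(delta_entry Jm i j) -betaM -(H (delta_mx i 0) (delta_mx j 0)).
by rewrite !betaM trmx_mul !mulmxA.
Qed.

Lemma detJ : \det Jm != 0.
Proof.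
rewrite det_diag; apply/prodf_neq0 => i _; rewrite mxE /jsgn.
by case: ifP => _; rewrite ?oppr_eq0 oner_eq0.
Qed.

Lemma pres_det h : pres h -> \det h ^+ 2 = 1.
Proof.
move=> /pres_mx /(congr1 determinant); rewrite !det_mulmx det_tr.
move=> e; apply: (mulIf detJ); by rewrite mul1r -[in RHS]e expr2 mulrAC.
Qed.

Lemma pres_mul h g : pres h -> pres g -> pres (h *m g).
Proof. by move=> Hh Hg x y; rewrite -!mulmxA Hh Hg. Qed.

Definition refl v : 'M[C]_(1 + d) := 1%:M - (2 / betaC v v) *: (v *m (v^T *m Jm)).

Lemma reflE v x : refl v *m x = x - (2 / betaC v v * betaC v x) *: v.
Proof.
rewrite /refl mulmxBl mul1mx -scalemxAl -!mulmxA.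
rewrite [v^T *m (Jm *m x)]mx11_scalar mul_mx_scalar scalerA mulmxA -betaM //.
Qed.

Lemma refl_pres v : betaC v v != 0 -> pres (refl v).
Proof.
move=> hv x y; rewrite !reflE !betaCE betBl !betBr !betZl !betZr.
rewrite !(betS v) -!betaCE; field; exact: hv.
Qed.
End Mx.
Definition ii {R : realType} : R[i] := Complex 0 1.

Section Vec.
Variables (R : realType) (n : nat).
Local Notation C := (R[i]).
Local Notation Re := (@complex.Re R).
Local Notation Im := (@complex.Im R).
Implicit Types x y z w v p q : 'cV[C]_(1 + n.+1).

Definition i1 : 'I_(1 + n.+1) := lift ord0 ord0.
Definition vec2 (a b : C) : 'cV[C]_(1 + n.+1) :=
  \col_i (if i == ord0 then a else if i == i1 then b else 0).

Lemma lift_neq0 m (j : 'I_m) : (lift ord0 j == ord0) = false.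
Proof. by rewrite eq_sym (negbTE (neq_lift ord0 j)). Qed.

Lemma i1_neq0 : (i1 == ord0) = false.
Proof. by rewrite /i1 lift_neq0. Qed.

Lemma vec2_0 a b : vec2 a b ord0 0 = a.
Proof. by rewrite mxE eqxx. Qed.
Lemma vec2_1 a b : vec2 a b i1 0 = b.
Proof. by rewrite mxE i1_neq0 eqxx. Qed.
Lemma vec2_lift a b j : vec2 a b (lift ord0 j) 0 = if j == ord0 then b else 0.
Proof. by rewrite mxE lift_neq0 /i1 (inj_eq (@lift_inj _ ord0)). Qed.

Lemma bet_vec2r x a b : betaC x (vec2 a b) = x ord0 0 * a - x i1 0 * b.
Proof.
rewrite /betaC vec2_0 big_ord_recl vec2_lift eqxx big1 ?addr0 // => j _.
by rewrite vec2_lift lift_neq0 mulr0.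
Qed.
Lemma bet_vec2l x a b : betaC (vec2 a b) x = a * x ord0 0 - b * x i1 0.
Proof. by rewrite betaCE betS -betaCE bet_vec2r mulrC (mulrC _ b). Qed.

Lemma vec2_lin a b a' b' k : vec2 a b - k *: vec2 a' b' = vec2 (a - k * a') (b - k * b').
Proof.
apply/matrixP => i j; rewrite !mxE.
by case: ifP => _; [|case: ifP => _]; rewrite ?mulr0 ?subr0.
Qed.

Lemma conjv_vec2 a b : conjv (vec2 a b) = vec2 a^* b^*.
Proof.
apply/matrixP => i j; rewrite !mxE.
by case: ifP => _; [|case: ifP => _]; rewrite ?rmorph0.
Qed.

Lemma ImD (a b : C) : Im (a + b) = Im a + Im b.
Proof. by case: a => ? ?; case: b => ? ?. Qed.

Lemma Imv_E x i : Imv x i 0 = Im (x i 0).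
Proof. by rewrite mxE. Qed.

Lemma Vplus_vec2 a b : 0 < Im (a + b) -> 0 < Im (a - b) -> Vplus (Imv (vec2 a b)).
Proof.
rewrite ImD ImB => h1 h2; split; first by rewrite Imv_E vec2_0; lra.
rewrite /betaR !Imv_E vec2_0 big_ord_recl !Imv_E vec2_lift eqxx big1 ?addr0.
  nra.
by move=> j _; rewrite !Imv_E vec2_lift lift_neq0 /= mulr0.
Qed.

Lemma refl_to p q : betaC p p = betaC q q -> betaC (p - q) (p - q) != 0 ->
  refl (p - q) *m p = q.
Proof.
move=> e hv; rewrite reflE.
have -> : 2 / betaC (p - q) (p - q) * betaC (p - q) p = 1.
  move: hv; rewrite !betaCE !betBl !betBr -!betaCE e (betaCE q p) betS -betaCE => hv.
  by field.
by rewrite scale1r opprB addrC subrK.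
Qed.

Lemma refl_fix v x : betaC v x = 0 -> refl v *m x = x.
Proof. by move=> e; rewrite reflE e mulr0 scale0r subr0. Qed.

Definition rho : 'rV[C]_(1 + n.+1) := \row_i (if i == i1 then -1 else 1).
Definition rr : 'M[C]_(1 + n.+1) := diag_mx rho.

Lemma rho_sq i : rho 0 i * rho 0 i = 1.
Proof. by rewrite mxE; case: ifP => _; rewrite ?mulrNN mulr1. Qed.

Lemma rrE x i : (rr *m x) i 0 = rho 0 i * x i 0.
Proof. by rewrite /rr mul_diag_mx mxE. Qed.
Lemma rho0 : rho 0 ord0 = 1.
Proof. by rewrite mxE eq_sym i1_neq0. Qed.
Lemma rho_conj i : (rho 0 i)^* = rho 0 i.
Proof. by rewrite mxE; case: ifP => _; rewrite ?rmorphN rmorph1. Qed.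
Lemma ImN (a : C) : Im (- a) = - Im a.
Proof. by case: a. Qed.
Lemma Im_rho i a : Im (rho 0 i * a) * Im (rho 0 i * a) = Im a * Im a.
Proof. by rewrite mxE; case: ifP => _; rewrite ?mulN1r ?ImN ?mulrNN ?mul1r. Qed.

Lemma rr_pres : pres rr.
Proof.
move=> x y; rewrite /betaC !rrE rho0 !mul1r; congr (_ - _).
by apply: eq_bigr => i _; rewrite !rrE mulrACA rho_sq mul1r.
Qed.

Lemma rr_det : \det rr = -1.
Proof.
rewrite det_diag (bigD1 i1) //= big1 ?mulr1; first by rewrite mxE eqxx.
by move=> i /negbTE hi; rewrite mxE hi.
Qed.

Lemma rr_conj x : conjv (rr *m x) = rr *m conjv x.
Proof.
have cE : forall y i, conjv y i 0 = (y i 0)^* by move=> y i; rewrite mxE.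
apply/matrixP => i j; rewrite [j]ord1 cE !rrE cE.
by rewrite rmorphM /= rho_conj.
Qed.

Lemma rr_Vplus x : Vplus (Imv x) -> Vplus (Imv (rr *m x)).
Proof.
case=> h1 h2; split; first by rewrite Imv_E rrE rho0 mul1r -Imv_E.
move: h2; rewrite /betaR !Imv_E !rrE rho0 !mul1r.
suff -> : \sum_(i < n.+1) Imv (rr *m x) (lift ord0 i) 0 *
     Imv (rr *m x) (lift ord0 i) 0 =
   \sum_(i < n.+1) Imv x (lift ord0 i) 0 * Imv x (lift ord0 i) 0 by [].
by apply: eq_bigr => i _; rewrite !Imv_E rrE Im_rho.
Qed.
End Vec.
Arguments rr {R n}.
Arguments rho {R n}.
Arguments i1 {n}.
Arguments vec2 {R n}.

Section Asm.
Variables (R : realType) (n : nat).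
Local Notation C := (R[i]).
Implicit Types x y z w v : 'cV[C]_(1 + n.+1).
Implicit Types h g : 'M[C]_(1 + n.+1).

Lemma XiPlus_rr y : XiPlus y -> XiPlus (rr *m y).
Proof. by case=> h1 h2; split; [rewrite /dSC rr_pres | exact: rr_Vplus]. Qed.

Lemma assemble z w h : pres h -> XiPlus (h *m z) -> XiPlus (conjv (h *m conjv w)) ->
  exists g z1 w1, SOC g /\ XiPlus z1 /\ XiPlus w1 /\ z = g *m z1 /\ w = conjm g *m w1.
Proof.
wlog e : h / \det h = 1.
  move=> Hw Hh Xz Xw; have /eqP := pres_det Hh; rewrite sqrf_eq1 => /orP [/eqP e|/eqP e].
    exact: (Hw h).
  apply: (Hw (rr *m h)).
  - by rewrite det_mulmx rr_det e mulrNN mulr1.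
  - by apply: pres_mul => //; apply: rr_pres.
  - by rewrite -mulmxA; apply: XiPlus_rr.
  - by rewrite -mulmxA rr_conj; apply: XiPlus_rr.
move=> Hh Xz Xw.
have hu : h \in unitmx by rewrite unitmxE unitfE e oner_eq0.
exists (invmx h), (h *m z), (conjv (h *m conjv w)); split; last split => //.
  split; first by rewrite det_inv e invr1.
  by move=> x y; rewrite -[in RHS](mulKVmx hu x) -[in RHS](mulKVmx hu y) Hh.
split => //; split; first by rewrite mulKmx.
have := conjv_mul (invmx h) (conjv (h *m conjv w)); rewrite conjvK mulKmx // => E.
by move/(congr1 (@conjv R n.+1)): E; rewrite !conjvK => ->.
Qed.
End Asm.

Section CL.
Variable R : realType.
Local Notation C := (R[i]).
Local Notation Re := (@complex.Re R).
Local Notation Im := (@complex.Im R).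

Lemma ImN' (a : C) : Im (- a) = - Im a. Proof. by case: a. Qed.
Lemma ReN' (a : C) : Re (- a) = - Re a. Proof. by case: a. Qed.
Lemma ReD' (a b : C) : Re (a + b) = Re a + Re b. Proof. by case: a => ? ?; case: b. Qed.
Lemma ImD' (a b : C) : Im (a + b) = Im a + Im b. Proof. by case: a => ? ?; case: b. Qed.

Lemma Im_negV (x : C) : Im x < 0 -> Im (- x^-1) < 0.
Proof.
case: x => a b /= hb; rewrite opprK.
have hN : 0 < a ^+ 2 + b ^+ 2 by have := sqr_ge0 a; rewrite -[b ^+ 2]sqrrN; nra.
by rewrite ltr_pdivrMr // mul0r.
Qed.

Lemma choose_mu (M P c : C) : M * P = -1 -> ii * (M + P) = c + c ->
  ~ in_half_line c -> exists t : R, Im ((1 +i* t) * M) < 0.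
Proof.
rewrite /ii; case: M => a b; case: P => p q; case: c => c1 c2 /=.
rewrite /in_half_line /=.
case=> e1 e2 [] e3 e4 hc.
have [a0|an0] := eqVneq a 0.
  exists 0; subst a; rewrite mul1r mul0r addr0.
  move: e1 e2 e3 e4; rewrite !mul0r !mul1r !add0r ?sub0r ?oppr0 => e1 e2 e3 e4.
  rewrite ltNge; apply/negP => hb0; apply: hc.
  have bq : b * q = 1 by lra.
  have hb : b != 0.
    by apply/eqP=> h; move: bq; rewrite h mul0r => /eqP; rewrite eq_sym oner_eq0.
  have hp : p = 0 by apply/eqP; move/eqP: e2; rewrite mulf_eq0 (negbTE hb).
  have b0 : 0 < b by rewrite lt_def hb.
  have q0 : 0 < q by nra.
  split; first lra.
  have := sqr_ge0 (b - q); nra.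
exists (- (b + 1) / a) => /=.
rewrite mul1r divfK //; lra.
Qed.
End CL.

Section Core.
Variables (R : realType) (n : nat).
Local Notation C := (R[i]).
Local Notation Re := (@complex.Re R).
Local Notation Im := (@complex.Im R).
Implicit Types x y z w v p q u : 'cV[C]_(1 + n.+1).
Implicit Types h g : 'M[C]_(1 + n.+1).

Definition aa : 'cV[C]_(1 + n.+1) := vec2 ii 0.
Definition e0 : 'cV[C]_(1 + n.+1) := vec2 1 0.

Lemma subZE x k v i j : (x - k *: v) i j = x i j - k * v i j.
Proof. by rewrite !mxE. Qed.

Lemma betBB p q : betaC (p - q) (p - q) = betaC p p - 2 * betaC p q + betaC q q.
Proof. rewrite !betaCE betBl !betBr (betS q p); ring. Qed.

Lemma bet_aa : betaC aa aa = -1.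
Proof. by rewrite /aa bet_vec2r vec2_0 vec2_1 mulr0 subr0 -expr2 sqr_i. Qed.

Lemma bet_e0 : betaC e0 e0 = 1.
Proof. by rewrite /e0 bet_vec2r vec2_0 vec2_1 mulr0 subr0 mulr1. Qed.

Lemma stepA z : dSC z -> exists h, pres h /\ h *m z = aa.
Proof.
move=> hz; rewrite /dSC in hz.
have [hne|heq] := eqVneq (betaC (z - aa) (z - aa)) 0; last first.
  exists (refl (z - aa)); split; first exact: refl_pres.
  by apply: refl_to => //; rewrite hz bet_aa.
have he0 : betaC e0 e0 != 0 by rewrite bet_e0 oner_eq0.
set z' := refl e0 *m z.
have hz' : betaC z' z' = -1 by rewrite /z' refl_pres.
have z'0 : z' ord0 0 = - z ord0 0.
  rewrite /z' reflE subZE bet_e0 /e0 bet_vec2l vec2_0 divr1; ring.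
have hza : betaC z aa = z ord0 0 * ii by rewrite /aa bet_vec2r mulr0 subr0.
have hz'a : betaC z' aa = z' ord0 0 * ii by rewrite /aa bet_vec2r mulr0 subr0.
move: hne; rewrite betBB hz bet_aa hza => hne.
exists (refl (z' - aa) *m refl e0); split.
  apply: pres_mul; last exact: refl_pres.
  apply: refl_pres; rewrite betBB hz' bet_aa hz'a z'0.
  have -> : -1 - 2 * (- z ord0 0 * ii) + -1 = -4 - (-1 - 2 * (z ord0 0 * ii) + -1).
    ring.
  by rewrite hne subr0 oppr_eq0 pnatr_eq0.
rewrite -mulmxA -/z'; apply: refl_to; first by rewrite hz' bet_aa.
rewrite betBB hz' bet_aa hz'a z'0.
have -> : -1 - 2 * (- z ord0 0 * ii) + -1 = -4 - (-1 - 2 * (z ord0 0 * ii) + -1).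
  ring.
by rewrite hne subr0 oppr_eq0 pnatr_eq0.
Qed.

Lemma half_add (A B : C) : (A + B) / 2 + (A - B) / 2 = A.
Proof. have h2 : (2 : C) != 0 by rewrite pnatr_eq0. by field. Qed.
Lemma half_sub (A B : C) : (A + B) / 2 - (A - B) / 2 = B.
Proof. have h2 : (2 : C) != 0 by rewrite pnatr_eq0. by field. Qed.

Lemma bet_ww (mu : C) : betaC (vec2 ((mu - 1) / 2) ((mu + 1) / 2) : 'cV[C]_(1 + n.+1)) (vec2 ((mu - 1) / 2) ((mu + 1) / 2)) = - mu :> C.
Proof.
rewrite bet_vec2r vec2_0 vec2_1.
have h2 : (2 : C) != 0 by rewrite pnatr_eq0. by field.
Qed.

Lemma refl_ww (mu x0 x1 : C) : mu != 0 ->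
  refl (vec2 ((mu - 1) / 2) ((mu + 1) / 2)) *m (vec2 x0 x1 : 'cV[C]_(1 + n.+1)) =
  vec2 ((mu * (x0 - x1) + (x0 + x1) / mu) / 2) ((mu * (x0 - x1) - (x0 + x1) / mu) / 2).
Proof.
move=> hmu; rewrite reflE bet_ww bet_vec2l !vec2_0 !vec2_1 vec2_lin.
have h2 : (2 : C) != 0 by rewrite pnatr_eq0.
by congr vec2; field.
Qed.
End Core.

Section ND.
Variables (R : realType) (n : nat).
Local Notation C := (R[i]).
Local Notation Re := (@complex.Re R).
Local Notation Im := (@complex.Im R).
Implicit Types x y z w v p q u : 'cV[C]_(1 + n.+1).
Implicit Types h g : 'M[C]_(1 + n.+1).

Definition Qs u : C := \sum_(j < n.+1) u (lift ord0 j) 0 * u (lift ord0 j) 0.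

Lemma subE x y i j : (x - y) i j = x i j - y i j.
Proof. by rewrite !mxE. Qed.

Lemma Im_i_div (t : R) : 0 < Im (ii / (1 +i* t)).
Proof.
rewrite /ii /= !mul0r !mul1r.
have hN : 0 < 1 ^+ 2 + t ^+ 2 by have := sqr_ge0 t; rewrite expr1n; lra.
by rewrite add0r invr_gt0.
Qed.

Lemma Im_conjD (a b : C) : Im (a^* + b^*) = - Im (a + b).
Proof. by case: a => ? ?; case: b => ? ? /=; rewrite opprD. Qed.
Lemma Im_conjB (a b : C) : Im (a^* - b^*) = - Im (a - b).
Proof. by case: a => ? ?; case: b => ? ? /=; rewrite opprD. Qed.

Lemma case_nd u : betaC u u = -1 -> ~ in_half_line (ii * u ord0 0) -> Qs u != 0 ->
  exists h, pres h /\ XiPlus (h *m (aa R n)) /\ XiPlus (conjv (h *m u)).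
Proof.
move=> hu hc hQ.
have hQ1 : u ord0 0 * u ord0 0 - Qs u = -1 by exact: hu.
set s := sqrtc (Qs u).
have ss : s * s = Qs u by rewrite -expr2 sqr_sqrtc.
have s0 : s != 0 by apply: contraNneq hQ => E; rewrite -ss E mulr0.
have [s' [ss' s'0 s'u]] : exists s', [/\ s' * s' = Qs u, s' != 0 & s' - u i1 0 != 0].
  have [E|E] := eqVneq (u i1 0) s.
    exists (- s); split; rewrite ?mulrNN ?oppr_eq0 //.
    rewrite E -opprD oppr_eq0 -mulr2n mulrn_eq0 negb_or s0 andbT //.
  by exists s; split; rewrite // subr_eq0 eq_sym.
have e0' : u ord0 0 * u ord0 0 = s' * s' - 1 by rewrite ss' -hQ1; ring.
set m : 'cV[C]_(1 + n.+1) := vec2 (u ord0 0) s'.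
have hm : betaC m m = -1 by rewrite /m bet_vec2r vec2_0 vec2_1 e0'; ring.
have huv : betaC (u - m) (u - m) != 0.
  rewrite betBB hu hm /m bet_vec2r e0'.
  have -> : -1 - 2 * (s' * s' - 1 - u i1 0 * s') + -1 = (-2) * s' * (s' - u i1 0) by ring.
  by rewrite !mulf_neq0 // oppr_eq0 pnatr_eq0.
have h2u : refl (u - m) *m u = m by apply: refl_to => //; rewrite hu hm.
have h2a : refl (u - m) *m aa R n = aa R n.
  by apply: refl_fix; rewrite /aa bet_vec2r subE /m vec2_0 subrr mul0r mulr0 subr0.
have hM : (u ord0 0 - s') * (u ord0 0 + s') = -1.
  have E : u ord0 0 * u ord0 0 - s' * s' = -1 by rewrite e0'; ring.
  by rewrite -E; ring.
have hc2 : ii * ((u ord0 0 - s') + (u ord0 0 + s')) = ii * u ord0 0 + ii * u ord0 0 by ring.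
have [t ht] := choose_mu hM hc2 hc.
set mu : C := 1 +i* t.
have hmu : mu != 0.
  by apply/eqP => E; have := congr1 (@complex.Re R) E; rewrite /= => /eqP; rewrite oner_eq0.
set ww : 'cV[C]_(1 + n.+1) := vec2 ((mu - 1) / 2) ((mu + 1) / 2).
have hww : betaC ww ww != 0 by rewrite bet_ww oppr_eq0.
have Hh : pres (refl ww *m refl (u - m)) by apply: pres_mul; apply: refl_pres.
exists (refl ww *m refl (u - m)); split => //; split.
- split; first by rewrite /dSC Hh bet_aa.
  rewrite -mulmxA h2a /aa refl_ww //; apply: Vplus_vec2; rewrite ?half_add ?half_sub.
  + by rewrite subr0 /mu /ii /= mulr1 mulr0 addr0 ltr01.
  + by rewrite addr0 /mu; exact: Im_i_div.
split; first by rewrite /dSC bet_conj Hh hu rmorphN rmorph1.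
have E : refl ww *m (refl (u - m) *m u) = refl ww *m m := congr1 (mulmx (refl ww)) h2u.
rewrite -mulmxA E /m refl_ww // conjv_vec2; apply: Vplus_vec2.
  by rewrite Im_conjD half_add oppr_gt0.
rewrite Im_conjB half_sub oppr_gt0.
have hMne : u ord0 0 - s' != 0.
  by apply: contra_eq_neq hM => ->; rewrite mul0r eq_sym oppr_eq0 oner_eq0.
have eP : (u ord0 0 + s') / mu = - (mu * (u ord0 0 - s'))^-1.
  have -> : u ord0 0 + s' = - (u ord0 0 - s')^-1.
    by apply: (mulfI hMne); rewrite hM mulrN mulfV.
  by rewrite invfM mulNr mulrC.
by rewrite eP; apply: Im_negV.
Qed.
End ND.

Section D.
Variables (R : realType) (n : nat).
Local Notation C := (R[i]).
Local Notation Re := (@complex.Re R).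
Local Notation Im := (@complex.Im R).
Implicit Types x y z w v p q u : 'cV[C]_(1 + n.+1).

Lemma hii : ii * ii = -1 :> C.
Proof. by rewrite -expr2 sqr_i. Qed.

Lemma half_m1 : in_half_line (-1 : C).
Proof. by split => //=; rewrite ?oppr0. Qed.

Lemma realC_eq0 (x : R) : (x%:C == 0 :> C) = (x == 0).
Proof. by apply/eqP/eqP => [[]|->]. Qed.

Lemma mul_conj (a : C) : a * a^* = (Re a ^+ 2 + Im a ^+ 2)%:C.
Proof. by case: a => x y; apply/eqP; rewrite eq_complex /= !expr2; apply/andP; split; apply/eqP; ring. Qed.

Lemma Im_tconj (t : R) (a : C) : Im ((t%:C * a^*)^*) = t * Im a.
Proof. by case: a => x y /=; ring. Qed.

Lemma Vplus_sp y : Im (y ord0 0) = 1 ->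
  \sum_(j < n.+1) Im (y (lift ord0 j) 0) ^+ 2 < 1 -> Vplus (Imv y).
Proof.
move=> h0 hs; split; first by rewrite Imv_E h0 ltr01.
rewrite /betaR !Imv_E h0 mulr1 subr_gt0.
suff -> : \sum_(i < n.+1) Imv y (lift ord0 i) 0 * Imv y (lift ord0 i) 0 =
  \sum_(j < n.+1) Im (y (lift ord0 j) 0) ^+ 2 by [].
by apply: eq_bigr => j _; rewrite Imv_E expr2.
Qed.

Lemma case_d u : betaC u u = -1 -> ~ in_half_line (ii * u ord0 0) -> Qs u = 0 ->
  exists h, pres h /\ XiPlus (h *m (aa R n)) /\ XiPlus (conjv (h *m u)).
Proof.
move=> hu hc hQ.
have hQ1 : u ord0 0 * u ord0 0 - Qs u = -1 by exact: hu.
rewrite hQ subr0 in hQ1.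
have hc1 : ii * u ord0 0 = 1.
  have : (ii * u ord0 0) ^+ 2 == 1.
    by rewrite exprMn !expr2 hii hQ1 mulrNN mulr1.
  rewrite sqrf_eq1 => /orP [/eqP //|/eqP E].
  by exfalso; apply: hc; rewrite E; exact: half_m1.
have hu0 : u ord0 0 = - ii.
  have -> : u ord0 0 = - (ii * ii) * u ord0 0 by rewrite hii opprK mul1r.
  by rewrite mulNr -mulrA hc1 mulr1.
set NR := \sum_(j < n.+1) (Re (u (lift ord0 j) 0) ^+ 2 + Im (u (lift ord0 j) 0) ^+ 2).
set SI := \sum_(j < n.+1) Im (u (lift ord0 j) 0) ^+ 2.
have hSI : SI <= NR.
  by apply: ler_sum => j _; rewrite lerDr sqr_ge0.
have hNR : 0 <= NR by apply: sumr_ge0 => j _; rewrite addr_ge0 ?sqr_ge0.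
have Xa : XiPlus (aa R n).
  split; first exact: bet_aa.
  by apply: Vplus_vec2; rewrite ?addr0 ?subr0 /ii /= ltr01.
have [NR0|NRn0] := eqVneq NR 0.
  exists 1%:M; split; first by move=> x y; rewrite !mul1mx.
  rewrite !mul1mx; split => //; split; first by rewrite /dSC bet_conj hu rmorphN rmorph1.
  apply: Vplus_sp; first by rewrite mxE hu0 /ii /=; rewrite opprK.
  suff -> : \sum_(j < n.+1) Im (conjv u (lift ord0 j) 0) ^+ 2 = SI.
    by move: hSI; rewrite NR0; lra.
  by apply: eq_bigr => j _; rewrite mxE cIm_conj sqrrN.
have NRp : 0 < NR by rewrite lt_def NRn0.
set t : R := (1 + NR)^-1.
have h1NR : 0 < 1 + NR by rewrite addr_gt0 ?ltr01.
have tp : 0 < t by rewrite invr_gt0.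
have ht1 : t * (1 + NR) = 1 by rewrite mulVf // gt_eqF.
set mm : 'cV[C]_(1 + n.+1) := \col_i (if i == ord0 then - ii else t%:C * (u i 0)^*).
have mm0 : mm ord0 0 = - ii by rewrite mxE eqxx.
have mmL : forall j, mm (lift ord0 j) 0 = t%:C * (u (lift ord0 j) 0)^*.
  by move=> j; rewrite mxE lift_neq0.
have cE : forall x i, conjv x i 0 = (x i 0)^* by move=> x i; rewrite mxE.
have hmm : betaC mm mm = -1.
  rewrite /betaC mm0.
  have -> : \sum_(j < n.+1) mm (lift ord0 j) 0 * mm (lift ord0 j) 0 = t%:C * t%:C * (Qs u)^*.
    rewrite /Qs rmorph_sum mulr_sumr; apply: eq_bigr => j _; rewrite !mmL rmorphM /=; ring.
  by rewrite hQ rmorph0 mulr0 subr0 mulrNN hii.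
have hum : betaC u mm = -1 - t%:C * NR%:C.
  rewrite /betaC mm0 hu0 mulrNN hii; congr (_ - _).
  rewrite /NR raddf_sum mulr_sumr; apply: eq_bigr => j _.
  by rewrite mmL mulrCA mul_conj.
have hv : betaC (u - mm) (u - mm) != 0.
  rewrite betBB hu hum hmm.
  have -> : -1 - 2 * (-1 - t%:C * NR%:C) + -1 = 2 * (t%:C * NR%:C) by ring.
  by rewrite mulf_neq0 ?pnatr_eq0 // mulf_neq0 // realC_eq0 ?gt_eqF.
have h2u : refl (u - mm) *m u = mm by apply: refl_to => //; rewrite hu hmm.
have h2a : refl (u - mm) *m aa R n = aa R n.
  by apply: refl_fix; rewrite /aa bet_vec2r subE mm0 hu0 subrr mul0r mulr0 subr0.
exists (refl (u - mm)); split; first exact: refl_pres.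
rewrite h2a h2u; split => //.
split; first by rewrite /dSC bet_conj hmm rmorphN rmorph1.
apply: Vplus_sp.
  by rewrite cE mm0 /ii /= opprK.
have -> : \sum_(j < n.+1) Im (conjv mm (lift ord0 j) 0) ^+ 2 = t ^+ 2 * SI.
  rewrite /SI mulr_sumr; apply: eq_bigr => j _.
  by rewrite cE mmL Im_tconj exprMn.
have : t ^+ 2 * SI <= t ^+ 2 * NR by rewrite ler_wpM2l ?sqr_ge0.
nra.
Qed.
End D.

Section Fin.
Variables (R : realType) (n : nat).
Local Notation C := (R[i]).
Implicit Types x y z w v p q u : 'cV[C]_(1 + n.+1).

Lemma core z u : dSC z -> dSC u -> ~ in_half_line (betaC z u) ->
  exists h, pres h /\ XiPlus (h *m z) /\ XiPlus (conjv (h *m u)).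
Proof.
move=> hz hu hc; have [h1 [H1 e1]] := stepA hz.
set u' := h1 *m u.
have hu' : betaC u' u' = -1 by rewrite /u' H1.
have hc' : ~ in_half_line (ii * u' ord0 0).
  have E : betaC z u = ii * u' ord0 0.
    by rewrite -(H1 z u) e1 /aa bet_vec2l mul0r subr0.
  by rewrite -E.
have [hQ|hQ] := eqVneq (Qs u') 0.
  have [h2 [H2 [X1 X2]]] := case_d hu' hc' hQ.
  exists (h2 *m h1); split; first exact: pres_mul.
  by rewrite -!mulmxA e1.
have [h2 [H2 [X1 X2]]] := case_nd hu' hc' hQ.
exists (h2 *m h1); split; first exact: pres_mul.
by rewrite -!mulmxA e1.
Qed.
End Fin.

Theorem mainTheorem4 (R : realType) (d : nat) (hd : (1 <= d)%N)
    (z w : 'cV[R[i]]_(1 + d)) :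
  (exists (g : 'M[R[i]]_(1 + d)) (z1 w1 : 'cV[R[i]]_(1 + d)),
      SOC g /\ XiPlus z1 /\ XiPlus w1 /\
      z = g *m z1 /\ w = conjm g *m w1)
  <->
  (dSC z /\ dSC w /\ ~ in_half_line (betaC z (conjv w))).
Proof.
split.
  move=> [g [z1 [w1 [[dg Pg] [X1 [X2 [-> ->]]]]]]].
  split; first by rewrite /dSC Pg; case: X1.
  split; last by rewrite conjv_mul Pg; exact: fwd_half.
  rewrite /dSC -[LHS]conjcK -bet_conj conjv_mul Pg bet_conj.
  by case: X2 => -> _; rewrite !rmorphN !rmorph1.
case: d hd z w => [//|n] _ z w.
move=> [hz [hw hc]].
have hu : dSC (conjv w) by rewrite /dSC bet_conj hw rmorphN rmorph1.
have [h [Hh [X1 X2]]] := core hz hu hc.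
exact: assemble Hh X1 X2.
Qed.
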